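(* Let $n_d>2$ be an odd integer, $\mu=\frac{n_d-1}{2}$, and $\delta\in(0,1/n_d]$. Let $\varepsilon^*\ge0$ be the unique non-negative real with $\delta\sum_{x=0}^{n_d-1}e^{\varepsilon^*(\mu-|x-\mu|)}=1$. Then the distribution $P^*$ on $\{0,\dots,n_d-1\}$ given by $P^*(x)=\delta e^{\varepsilon^*(\mu-|x-\mu|)}$ (a truncated discrete Laplace distribution $P^*(x)=A e^{-\varepsilon^*|x-\mu|}$ with normalizing constant $A$) satisfies $H_{\varepsilon^*}(P^*\|P^*_+)\le\delta$ and $H_{\varepsilon^*}(P^*_+\|P^* )\le\delta$; every distribution $X$ on $\{0,\dots,n_d-1\}$ with $H_{\varepsilon}(X\|X_+)\le\delta$ and $H_{\varepsilon}(X_+\|X)\le\delta$ has $\varepsilon\ge\varepsilon^*$; and $P^*$ is the unique distribution on $\{0,\dots,n_d-1\}$ achieving this with $\varepsilon=\varepsilon^*$. Furthermore, when $\delta\in(1/n_d,1]$, the minimum such $\varepsilon$ is $0$, attained by the uniform distribution on $\{0,\dots,n_d-1\}$.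
   Context: For a distribution $X$ on $\mathbb{Z}$, $X_+$ is its shift by one, $X_+(x)=X(x-1)$. The hockey-stick divergence is $H_\varepsilon(P\|Q)=\sum_x[P(x)-e^\varepsilon Q(x)]_+$, where $[t]_+=\max\{t,0\}$. The additive noise mechanism with noise $X$ (release $n+Z$, $Z\sim X$) is $(\varepsilon,\delta)$-DP for neighboring counts differing by one iff $H_\varepsilon(X\|X_+)\le\delta$ and $H_\varepsilon(X_+\|X)\le\delta$. *)

(* Defs.v *)
From mathcomp Require Import all_boot all_order all_algebra.
From mathcomp Require Import all_classical all_reals all_analysis.
Set Implicit Arguments. Unset Strict Implicit. Unset Printing Implicit Defensive.
Import Order.TTheory GRing.Theory Num.Theory.
Local Open Scope ring_scope.

(* A (probability) distribution on Z supported in {0,...,n-1}.  We represent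
   it by its mass function on nat; the mass at negative integers is 0. *)
Definition is_dist {R : realType} (n : nat) (X : nat -> R) : Prop :=
  (forall x, 0 <= X x) /\ (forall x, (n <= x)%N -> X x = 0) /\
  \sum_(x < n) X x = 1.

(* Shift by one: X_+(x) = X(x-1) (and X_+(0) = X(-1) = 0). *)
Definition shift {R : realType} (X : nat -> R) : nat -> R :=
  fun x => if x is k.+1 then X k else 0.

(* Hockey-stick divergence H_eps(P||Q) = sum_x [P x - e^eps Q x]_+ for mass
   functions P, Q on Z vanishing outside {0,...,N-1}; all other terms are 0. *)
Definition hockey {R : realType} (N : nat) (eps : R) (P Q : nat -> R) : R :=
  \sum_(x < N) Num.max (P x - expR eps * Q x) 0.

(* The additive noise mechanism with noise X (supported in {0,...,n-1}) is
   (eps,delta)-DP for neighboring counts.  Both X and X_+ vanish outside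
   {0,...,n}, so summing over x < n.+1 is the full sum over Z. *)
Definition dp_noise {R : realType} (n : nat) (eps delta : R) (X : nat -> R) : Prop :=
  hockey n.+1 eps X (shift X) <= delta /\ hockey n.+1 eps (shift X) X <= delta.

Definition Pstar {R : realType} (n : nat) (eps delta : R) : nat -> R :=
  let mu : R := (n%:R - 1) / 2 in
  fun x => if (x < n)%N then delta * expR (eps * (mu - `|x%:R - mu|)) else 0.

Definition normalizes {R : realType} (n : nat) (eps delta : R) : Prop :=
  let mu : R := (n%:R - 1) / 2 in
  delta * \sum_(x < n) expR (eps * (mu - `|(x : nat)%:R - mu|)) = 1.

Definition uniform {R : realType} (n : nat) : nat -> R :=
  fun x => if (x < n)%N then n%:R^-1 else 0.

(* Main.v *)
Require Import Defs.
From mathcomp Require Import all_boot all_order all_algebra.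
From mathcomp Require Import all_classical all_reals all_analysis.
From mathcomp Require Import lra zify.
Import Order.TTheory GRing.Theory Num.Theory.
Import numFieldNormedType.Exports.
Local Open Scope ring_scope.
Set Implicit Arguments. Unset Strict Implicit.

Lemma mxl (R : realType) (x y : R) : x <= Num.max x y.
Proof. by rewrite le_max lexx. Qed.
Lemma mxr (R : realType) (x y : R) : y <= Num.max x y.
Proof. by rewrite le_max lexx orbT. Qed.

Lemma mu_m (R : realType) (m : nat) : (((m.*2.+1)%:R - 1) / 2 : R) = m%:R.
Proof.
by rewrite -addn1 natrD addrK -muln2 natrM mulfK // pnatr_eq0.
Qed.

Definition Sm {R : realType} (m : nat) (e : R) : R :=
  \sum_(x < m.*2.+1) expR (e * (m%:R - `|(x : nat)%:R - m%:R|)).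

Lemma normE (R : realType) m (e d : R) :
  normalizes (m.*2.+1) e d <-> d * Sm m e = 1.
Proof. by rewrite /normalizes mu_m. Qed.

Lemma PstarE (R : realType) m (e d : R) x :
  Pstar (m.*2.+1) e d x =
  if (x < m.*2.+1)%N then d * expR (e * (m%:R - `|x%:R - m%:R|)) else 0.
Proof. by rewrite /Pstar mu_m. Qed.

Lemma fnn (R : realType) m (i : nat) : (i < m.*2.+1)%N ->
  0 <= (m%:R - `|i%:R - m%:R| : R).
Proof.
move=> hi; rewrite subr_ge0 ler_norml.
have : (i%:R : R) <= (m * 2)%:R by rewrite ler_nat muln2.
rewrite natrM => h1; have h2 : (0 : R) <= i%:R by [].
apply/andP; split; lra.
Qed.

Lemma fcase (R : realType) m (k : nat) :
  (m%:R - `|k%:R - m%:R| : R) = k%:R \/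
  (m%:R - `|k%:R - m%:R| : R) = (m * 2)%:R - k%:R.
Proof.
rewrite natrM; have [h|h] := lerP (m%:R : R) k%:R.
  by right; lra.
by left; lra.
Qed.

Lemma lipf (R : realType) (mu a b : R) :
  mu - `|a - mu| <= mu - `|b - mu| + `|a - b|.
Proof.
have := ler_distD a b mu; rewrite (distrC b a) => h; lra.
Qed.

Lemma part (R : realType) (t : nat -> R) a b N :
  (forall x, 0 <= t x) -> (a <= b)%N -> (b <= N)%N ->
  \sum_(a <= x < b) t x <= \sum_(x < N) t x.
Proof.
move=> ht ab bN; rewrite -(big_mkord xpredT t) (big_cat_nat (leq0n a) (leq_trans ab bN)).
rewrite (big_cat_nat ab bN) /=.
have h1 : 0 <= \sum_(0 <= x < a) t x by apply: sumr_ge0.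
have h2 : 0 <= \sum_(b <= x < N) t x by apply: sumr_ge0.
lra.
Qed.

Lemma fwd (R : realType) (X : nat -> R) (eps : R) k : 0 <= eps ->
  X k <= expR (eps * k%:R) *
    \sum_(0 <= x < k.+1) Num.max (X x - expR eps * Defs.shift X x) 0.
Proof.
move=> he; elim: k => [|k IH].
  rewrite big_nat1 mulr0 expR0 mul1r /= mulr0 subr0; exact: mxl.
rewrite big_nat_recr //= -/(Defs.shift X k.+1).
set S := \sum_(0 <= x < k.+1) _.
set t := Num.max _ _.
have ht : X k.+1 - expR eps * X k <= t by rewrite /t /=; exact: mxl.
have t0 : 0 <= t by exact: mxr.
have e1 : 1 <= expR (eps * k.+1%:R).
  by rewrite -expR0 ler_expR mulr_ge0.
have ee : expR (eps * k.+1%:R) = expR eps * expR (eps * k%:R).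
  by rewrite -expRD -natr1 mulrDr mulr1 addrC.
have h2 : expR eps * X k <= expR eps * (expR (eps * k%:R) * S).
  by rewrite ler_wpM2l // expR_ge0.
have h3 : t <= expR (eps * k.+1%:R) * t by rewrite ler_peMl.
rewrite ee in h3; rewrite ee mulrDr; lra.
Qed.


Lemma bwd (R : realType) (X : nat -> R) (eps : R) n : 0 <= eps -> X n = 0 ->
  forall j k, (k + j.+1 = n)%N -> X k <= expR (eps * j%:R) *
    \sum_(k.+1 <= x < n.+1) Num.max (Defs.shift X x - expR eps * X x) 0.
Proof.
move=> he Xn; elim => [|j IH] k hk.
  rewrite (_ : expR _ = 1); last by rewrite -[RHS]expR0; congr expR; apply: mulr0.
  rewrite -hk addn1 in Xn *; rewrite big_nat1.
  have : X k <= Num.max (Defs.shift X k.+1 - expR eps * X k.+1) 0.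
    by rewrite /= Xn mulr0 subr0; exact: mxl.
  lra.
have hk' : (k.+1 + j.+1 = n)%N by rewrite addSn -addnS.
have := IH _ hk'.
rewrite (@big_ltn _ _ _ k.+1 n.+1); last by rewrite -hk; lia.
set S := \sum_(k.+2 <= x < n.+1) _.
set t := Num.max _ _.
have ht : X k - expR eps * X k.+1 <= t by rewrite /t /=; exact: mxl.
have t0 : 0 <= t by exact: mxr.
have e1 : 1 <= expR (eps * j.+1%:R).
  by rewrite -expR0 ler_expR mulr_ge0.
have ee : expR (eps * j.+1%:R) = expR eps * expR (eps * j%:R).
  by rewrite -expRD -natr1 mulrDr mulr1 addrC.
move=> h1.
have h2 : expR eps * X k.+1 <= expR eps * (expR (eps * j%:R) * S).
  by rewrite ler_wpM2l // expR_ge0.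
have h3 : t <= expR (eps * j.+1%:R) * t by rewrite ler_peMl.
rewrite ee in h3; rewrite ee mulrDr; lra.
Qed.

Lemma bound (R : realType) m (X : nat -> R) (eps delta : R) k : 0 <= eps ->
  is_dist (m.*2.+1) X -> dp_noise (m.*2.+1) eps delta X -> (k < m.*2.+1)%N ->
  X k <= delta * expR (eps * (m%:R - `|k%:R - m%:R|)).
Proof.
move=> he [X0 [Xn _]] [d1 d2] hk.
case: (@fcase R m k) => ->.
  have := fwd X k he.
  have := part (t := fun x => Num.max (X x - expR eps * Defs.shift X x) 0)
    (fun x => @mxr _ _ _) (leq0n k.+1) (ltnW hk : (k.+1 <= (m.*2.+1).+1)%N).
  rewrite /hockey in d1.
  have := expR_ge0 (eps * k%:R).
  set E := expR _; set S := \sum_(0 <= x < k.+1) _; set T := \sum_(x < _) _.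
  move=> hE h1 h2.
  have : E * S <= E * delta by rewrite ler_wpM2l //; apply: le_trans d1.
  rewrite mulrC; lra.
have hj : (k + (m.*2 - k).+1 = m.*2.+1)%N by lia.
have := bwd he (Xn _ (leqnn _)) hj.
have := part (t := fun x => Num.max (Defs.shift X x - expR eps * X x) 0)
    (fun x => @mxr _ _ _) (ltnW hk : (k.+1 <= (m.*2.+1).+1)%N) (leqnn (m.*2.+1).+1).
rewrite /hockey in d2.
have -> : ((m.*2 - k)%:R : R) = (m * 2)%:R - k%:R.
  by rewrite natrB ?muln2 //; lia.
have := expR_ge0 (eps * ((m * 2)%:R - k%:R)).
set E := expR _; set S := \sum_(k.+1 <= x < _) _; set T := \sum_(x < _) _.
move=> hE h1 h2.
have : E * S <= E * delta by rewrite ler_wpM2l //; apply: le_trans d2.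
rewrite mulrC; lra.
Qed.


Lemma dp_gen (R : realType) n (eps delta : R) (X : nat -> R) :
  (0 < n)%N -> X n = 0 -> (forall x, 0 <= X x) ->
  (forall k, (k.+1 < n)%N -> X k.+1 <= expR eps * X k /\ X k <= expR eps * X k.+1) ->
  X 0 <= delta -> X n.-1 <= delta -> dp_noise n eps delta X.
Proof.
case: n => // n _ Xn X0 st h0 hl; split; rewrite /hockey.
- rewrite big_ord_recl /= mulr0 subr0 big1 => [|i _].
    by rewrite max_l ?X0 // addr0.
  rewrite /bump leq0n add0n /=; apply: max_r; rewrite subr_le0.
  rewrite add1n; have [hi|hi] := ltnP i.+1 n.+1; first exact: (st _ hi).1.
  have -> : i.+1 = n.+1 by have := ltn_ord i; lia.
  by rewrite Xn mulr_ge0 // expR_ge0.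
- rewrite big_ord_recr /= Xn mulr0 subr0 big1 => [|[[|k] hk] _] /=.
    by rewrite max_l ?X0 // add0r.
    by apply: max_r; rewrite sub0r oppr_le0 mulr_ge0 // expR_ge0.
  by apply: max_r; rewrite subr_le0; exact: (st _ hk).2.
Qed.

Lemma Pstep (R : realType) m (eps delta : R) a b : 0 <= eps -> 0 <= delta ->
  (a < m.*2.+1)%N -> (b < m.*2.+1)%N -> `|a%:R - b%:R : R| <= 1 ->
  Pstar (m.*2.+1) eps delta a <= expR eps * Pstar (m.*2.+1) eps delta b.
Proof.
move=> he hd ha hb hab; rewrite !PstarE ha hb.
rewrite mulrCA -expRD ler_wpM2l // ler_expR.
have h := lipf (m%:R : R) (a%:R) (b%:R).
rewrite -[X in _ <= X + _]mulr1 -mulrDr.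
by rewrite ler_wpM2l //; lra.
Qed.

Lemma P_ge0 (R : realType) m (eps delta : R) x : 0 <= delta ->
  0 <= Pstar (m.*2.+1) eps delta x.
Proof.
move=> hd; rewrite PstarE; case: ifP => _ //.
by rewrite mulr_ge0 // expR_ge0.
Qed.

Lemma Pdp (R : realType) m (eps delta : R) : 0 <= eps -> 0 <= delta ->
  dp_noise (m.*2.+1) eps delta (Pstar (m.*2.+1) eps delta).
Proof.
move=> he hd; apply: dp_gen => //.
- by rewrite PstarE ltnn.
- by move=> x; exact: P_ge0.
- move=> k hk; have e1 : (k.+1%:R : R) = k%:R + 1 by rewrite -natr1.
  split; apply: Pstep => //; try lia.
    by rewrite e1 addrAC subrr add0r normr1.
  by rewrite e1 distrC addrAC subrr add0r normr1.
- rewrite PstarE /=; change (0%:R : R) with (0 : R).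
  by rewrite sub0r normrN ger0_norm ?ler0n // subrr mulr0 expR0 mulr1.
- rewrite PstarE /= ltnSn -muln2 natrM.
  have -> : (m%:R * 2 - m%:R : R) = m%:R by lra.
  by rewrite ger0_norm ?ler0n // subrr mulr0 expR0 mulr1.
Qed.

Lemma Smono (R : realType) m (a b : R) : (0 < m)%N -> a < b -> Sm m a < Sm m b.
Proof.
move=> m0 ab; have im : (m < m.*2.+1)%N by lia.
rewrite /Sm (bigD1 (Ordinal im)) //= [in X in _ < X](bigD1 (Ordinal im)) //=.
apply: ltr_leD.
  by rewrite subrr normr0 subr0 ltr_expR ltr_pM2r // ltr0n.
apply: ler_sum => i _; rewrite ler_expR ler_wpM2r ?fnn //; exact: ltW.
Qed.

Lemma Sbig (R : realType) m (e : R) : (0 < m)%N -> expR (e * m%:R) <= Sm m e.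
Proof.
move=> m0; have im : (m < m.*2.+1)%N by lia.
rewrite /Sm (bigD1 (Ordinal im)) //= subrr normr0 subr0 lerDl.
by apply: sumr_ge0 => i _; exact: expR_ge0.
Qed.

Lemma S0 (R : realType) m : Sm m (0 : R) = (m.*2.+1)%:R.
Proof.
rewrite /Sm (eq_bigr (fun _ => 1)) => [|i _]; last by rewrite mul0r expR0.
by rewrite sumr_const card_ord.
Qed.


Lemma cont_exp (R : realType) (c : R) : continuous (fun e : R => expR (e * c)).
Proof.
move=> x; apply: (@continuous_comp _ _ _ (fun e : R => e * c) expR).
  apply: continuousM; [exact: id | exact: cst_continuous].
exact: continuous_expR.
Qed.

Lemma cont_sum (R : realType) n (c : 'I_n -> R) :
  continuous (fun e : R => \sum_(i < n) expR (e * c i)).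
Proof.
suff H : forall s : seq 'I_n, continuous (fun e : R => \sum_(i <- s) expR (e * c i)).
  exact: H.
elim => [|i s IH].
  have -> : (fun e : R => \sum_(i <- [::]) expR (e * c i)) = (fun=> 0).
    by apply: funext => e; rewrite big_nil.
  exact: cst_continuous.
have -> : (fun e : R => \sum_(j <- i :: s) expR (e * c j)) =
   ((fun e => expR (e * c i)) + (fun e => \sum_(j <- s) expR (e * c j))).
  by apply: funext => e; rewrite big_cons.
move=> x; apply: continuousD; [exact: cont_exp | exact: IH].
Qed.

Lemma exS (R : realType) m (delta : R) : (0 < m)%N -> 0 < delta ->
  delta * (m.*2.+1)%:R <= 1 -> exists e, 0 <= e /\ delta * Sm m e = 1.
Proof.
move=> m0 d0 dn.
pose b := (delta * m%:R)^-1.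
have mR : (0 : R) < m%:R by rewrite ltr0n.
have b0 : 0 <= b by rewrite invr_ge0 mulr_ge0 // ltW.
have bm : b * m%:R = delta^-1.
  rewrite /b invfM -mulrA mulVf ?mulr1 //; exact: lt0r_neq0.
have fb : 1 <= delta * Sm m b.
  have := Sbig b m0; rewrite bm => h.
  have h2 := expR_ge1Dx (delta^-1).
  have : delta * (1 + delta^-1) <= delta * Sm m b.
    by apply: ler_wpM2l; [exact: ltW | exact: le_trans h2 h].
  by rewrite mulrDr mulr1 mulfV ?lt0r_neq0 //; lra.
have cc : continuous (fun e : R => delta * Sm m e).
  move=> x; apply: (continuousM (s := fun=> delta) (t := @Sm R m)).
    exact: cst_continuous.
  rewrite /Sm; exact: cont_sum.
have cc' : {within `[0, b], continuous (fun e : R => delta * Sm m e)}%classic.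
  exact: continuous_subspaceT.
have [c hc fc] : exists2 c, c \in `[0, b] & delta * Sm m c = 1.
  apply: (@IVT R (fun e => delta * Sm m e) 0 b 1 b0 cc').
  by rewrite S0 ge_min le_max dn fb orbT.
exists c; split => //.
by move: hc; rewrite in_itv /= => /andP[].
Qed.

Unset Implicit Arguments. Set Strict Implicit.

Theorem mainTheorem14 (R : realType) (nd : nat) (delta : R) :
  odd nd -> (2 < nd)%N ->
  ((0 < delta <= nd%:R^-1) ->
     (exists! e : R, 0 <= e /\ normalizes nd e delta) /\
     forall epsS : R, 0 <= epsS -> normalizes nd epsS delta ->
       [/\ is_dist nd (Pstar nd epsS delta),
           dp_noise nd epsS delta (Pstar nd epsS delta),
           (forall (X : nat -> R) (eps : R), 0 <= eps ->
              is_dist nd X -> dp_noise nd eps delta X -> epsS <= eps) &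
           (forall X : nat -> R, is_dist nd X -> dp_noise nd epsS delta X ->
              forall x, X x = Pstar nd epsS delta x)]) /\
  ((nd%:R^-1 < delta <= 1) ->
     is_dist nd (uniform (R:=R) nd) /\ dp_noise nd 0 delta (uniform (R:=R) nd)).
Proof.
move=> hodd h2.
have [m hn] : exists m, nd = m.*2.+1.
  by exists nd./2; rewrite -{1}(odd_double_half nd) hodd add1n.
subst nd; have m0 : (0 < m)%N by lia.
have nR : (0 : R) < (m.*2.+1)%:R by rewrite ltr0n.
split.
  case/andP => d0 dn.
  have dn' : delta * (m.*2.+1)%:R <= 1.
    have := ler_wpM2r (ltW nR) dn; rewrite mulVf // lt0r_neq0 //.
  split.
    have [e [e0 he]] := @exS R m delta m0 d0 dn'.
    exists e; split; first by split => //; apply/normE.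
    move=> e' [e0' /normE he']; case: (ltgtP e e') => // h.
      by have := @Smono R m _ _ m0 h; rewrite -(ltr_pM2l d0) he he' ltxx.
    by have := @Smono R m _ _ m0 h; rewrite -(ltr_pM2l d0) he he' ltxx.
  move=> epsS e0 /normE hS.
  have Psum : \sum_(x < m.*2.+1) Pstar (m.*2.+1) epsS delta x = 1.
    rewrite (eq_bigr (fun x : 'I_(m.*2.+1) =>
       delta * expR (epsS * (m%:R - `|(x:nat)%:R - m%:R|)))) => [|i _].
      by rewrite -mulr_sumr.
    by rewrite PstarE ltn_ord.
  have hPd : is_dist (m.*2.+1) (Pstar (m.*2.+1) epsS delta).
    split; first by move=> x; exact: P_ge0 (ltW d0).
    split => // x hx; by rewrite PstarE ltnNge hx.
  split => //.
  - exact: Pdp e0 (ltW d0).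
  - move=> X eps he hX hdp; rewrite leNgt; apply/negP => lt.
    have : 1 <= delta * Sm m eps.
      have hX' := hX; case: hX' => _ [_ <-]; rewrite /Sm mulr_sumr.
      by apply: ler_sum => i _; exact: (@bound R m X eps delta i he hX hdp (ltn_ord i)).
    have := @Smono R m _ _ m0 lt; rewrite -(ltr_pM2l d0) hS; lra.
  - move=> X hX hdp x.
    case: (ltnP x (m.*2.+1)) => hx; last first.
      by rewrite PstarE ltnNge hx /=; case: hX => _ [Xn _]; exact: Xn.
    have hb : forall k, (k < m.*2.+1)%N -> X k <= Pstar (m.*2.+1) epsS delta k.
      by move=> k hk; rewrite PstarE hk; exact: (@bound R m X epsS delta k e0 hX hdp hk).
    have hz : \sum_(i < m.*2.+1) (Pstar (m.*2.+1) epsS delta i - X i) = 0.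
      by rewrite sumrB Psum; case: hX => _ [_ ->]; rewrite subrr.
    have hF : forall i : 'I_(m.*2.+1), xpredT i -> 0 <= Pstar (m.*2.+1) epsS delta i - X i.
      by move=> i _; rewrite subr_ge0; exact: hb.
    have := @psumr_eq0P R _ xpredT
      (fun i : 'I_(m.*2.+1) => Pstar (m.*2.+1) epsS delta i - X i) hF hz (Ordinal hx) erefl.
    by move=> /eqP; rewrite subr_eq0 /= => /eqP ->.
case/andP => d0 d1.
have U0 : forall x, 0 <= uniform (R:=R) (m.*2.+1) x.
  by move=> x; rewrite /uniform; case: ifP => // _; rewrite invr_ge0 ler0n.
split.
  split => //; split.
    by move=> x hx; rewrite /uniform ltnNge hx.
  rewrite (eq_bigr (fun _ => (m.*2.+1)%:R^-1)) => [|i _]; last by rewrite /uniform ltn_ord.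
  set N := (m.*2.+1)%:R; rewrite sumr_const card_ord -mulr_natr -/N mulVf //; exact: lt0r_neq0.
have dl : (m.*2.+1)%:R^-1 <= delta by exact: ltW.
have dg : 0 <= delta by apply: le_trans dl; rewrite invr_ge0 ler0n.
apply: (@dp_gen R (m.*2.+1) 0 delta (uniform (m.*2.+1))) => //.
- by rewrite /uniform ltnn.
- move=> k hk; rewrite /uniform expR0 !mul1r hk (ltnW hk); split; exact: lexx.
- by rewrite /uniform; case: ifP.
Qed.
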